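(* Let $P$ be a finite $\vee$-semilattice, $K\subseteq P$ any subset, and $A\in\mathbb{R}$. Then $\kappa:P\to\mathbb{R}$, $\kappa(x)=A-|\{k\in K: x\le k\}|$, is an isotone upper valuation on $P$.
   Context: For a poset $(P,\le)$ and $x\in P$: $\downarrow x=\{x'\in P: x'\le x\}$, $\uparrow x=\{x'\in P: x\le x'\}$. A function $f:P\to\mathbb{R}$ is isotone if $x\le y\Rightarrow f(x)\le f(y)$. For an isotone $f$ and $x,y\in P$ define $f^-(x,y)=\sup\{f(z):z\in\downarrow x\cap\downarrow y\}$ and $f^+(x,y)=\inf\{f(z):z\in\uparrow x\cap\uparrow y\}$, with $\inf\emptyset=+\infty$, $\sup\emptyset=-\infty$. An isotone $v:P\to\mathbb{R}$ is an upper valuation if $\uparrow x\cap\uparrow y\neq\emptyset$ for all $x,y\in P$ and $v^-(x,y)+v^+(x,y)\le v(x)+v(y)$ for all $x,y\in P$. *)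

(* Defs.v *)
From HB Require Import structures.
From mathcomp Require Import all_boot all_order all_algebra.
Set Implicit Arguments. Unset Strict Implicit. Unset Printing Implicit Defensive.
Import Order.TTheory GRing.Theory Num.Theory.
Local Open Scope ring_scope.

Section UpperValuation.
Context {disp : Order.disp_t} {P : finPOrderType disp} {R : realFieldType}.

Definition isotone (f : P -> R) : Prop :=
  forall x y : P, (x <= y)%O -> f x <= f y.

(* f^-(x,y) = sup { f z : z in (down x) cap (down y) }; None encodes -infinity (empty sup) *)
Definition fminus (f : P -> R) (x y : P) : option R :=
  if [pick z | (z <= x)%O && (z <= y)%O] is Some z0
  then Some (\big[Num.max/f z0]_(z | (z <= x)%O && (z <= y)%O) f z)
  else None.

(* f^+(x,y) = inf { f z : z in (up x) cap (up y) }; None encodes +infinity (empty inf) *)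
Definition fplus (f : P -> R) (x y : P) : option R :=
  if [pick z | (x <= z)%O && (y <= z)%O] is Some z0
  then Some (\big[Num.min/f z0]_(z | (x <= z)%O && (y <= z)%O) f z)
  else None.

(* extended-real inequality  f^-(x,y) + f^+(x,y) <= c  (c finite);
   -infinity + anything-not-(+infinity) <= c holds; +infinity on the left fails;
   the case -infinity + +infinity cannot arise once up-sets meet (handled below) *)
Definition ext_sum_le (m p : option R) (c : R) : Prop :=
  match m, p with
  | Some a, Some b => a + b <= c
  | None, Some _ => True
  | _, None => False
  end.

Definition upper_valuation (v : P -> R) : Prop :=
  isotone v /\
  (forall x y : P, exists z : P, (x <= z)%O /\ (y <= z)%O) /\
  (forall x y : P, ext_sum_le (fminus v x y) (fplus v x y) (v x + v y)).

End UpperValuation.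

Definition kappa {disp : Order.disp_t} {P : finPOrderType disp} {R : realFieldType}
  (K : {set P}) (A : R) (x : P) : R :=
  A - (#|[set k in K | (x <= k)%O]|)%:R.

(* Main.v *)
Require Import Defs.
From HB Require Import structures.
From mathcomp Require Import all_boot all_order all_algebra.
Import Order.TTheory GRing.Theory Num.Theory.
Local Open Scope ring_scope.
Local Notation "x `|` y" := (Order.join x y) (at level 52, left associativity).

Lemma aux (R : realFieldType) (A a b c d : R) : a + b <= c + d -> A - c <= (A - a) + (A - b) - (A - d).
Proof.
move=> h; rewrite lerBrDr (addrACA A (-c)) (addrACA A (-a)) lerD2l -!opprD lerN2.
exact: h.
Qed.

Theorem mainTheorem6 (disp : Order.disp_t) (P : finJoinSemilatticeType disp)
  (R : realFieldType) (K : {set P}) (A : R) :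
  upper_valuation (kappa K A).
Proof.
set U := fun w : P => [set k in K | (w <= k)%O].
have Umono : forall x y : P, (x <= y)%O -> U y \subset U x.
  move=> x y xy; apply/subsetP=> k; rewrite !inE => /andP[-> yk] /=.
  exact: le_trans xy yk.
have iso : isotone (kappa K A).
  move=> x y xy; rewrite /kappa lerD2l lerN2 ler_nat.
  exact: subset_leq_card (Umono _ _ xy).
have Ujoin : forall x y : P, U (x `|` y) = U x :&: U y.
  move=> x y; apply/setP=> k; rewrite !inE leUx.
  by case: (k \in K).
split; first exact iso.
split; first by move=> x y; exists (x `|` y); rewrite leUl leUr.
move=> x y; rewrite /ext_sum_le /fminus /fplus.
case: (pickP (fun z : P => (x <= z)%O && (y <= z)%O)) => [z0 _|H]; last first.
  by have := H (x `|` y) => /=; rewrite leUl leUr.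
set b := \big[Num.min/_]_(z | _) _.
have hb : b <= kappa K A (x `|` y).
  rewrite /b (bigD1 (x `|` y)) ?leUl ?leUr //=.
  by rewrite ge_min lexx.
case: pickP => [w0 hw0|//].
have key : forall z : P, (z <= x)%O && (z <= y)%O ->
    kappa K A z <= kappa K A x + kappa K A y - b.
  move=> z /andP[zx zy].
  apply: (@le_trans _ _ (kappa K A x + kappa K A y - kappa K A (x `|` y))).
    rewrite /kappa -/(U z) -/(U x) -/(U y) -/(U (x `|` y)) Ujoin.
    apply: aux; rewrite -!natrD ler_nat -cardsUI leq_add2r; apply: subset_leq_card.
    by rewrite subUset !Umono.
  by rewrite lerD2l lerN2.
rewrite -lerBrDr.
elim/big_ind: _ => [|a c ha hc|z hz].
- exact: key.
- by rewrite ge_max ha hc.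
- exact: key.
Qed.
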